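(* The Kahan map $\mathcal K$, $\tilde x_i=x_i\dfrac{(1-\epsilon H)(1+\epsilon H)}{(1-\epsilon H+2\epsilon v_{i-1})(1-\epsilon H+2\epsilon v_i)}$ ($i=1,\dots,n$), is a Poisson map with respect to the bracket $\{x_i,x_j\}=x_ix_j$ ($i<j$); that is, $\{\tilde x_i,\tilde x_j\}=\tilde x_i\tilde x_j$ for all $1\le i<j\le n$.
   Context: $(a_1,\dots,a_n)\in\mathbb R^n\setminus\{0\}$, $\epsilon>0$, $H=a_1x_1+\dots+a_nx_n$, $v_0:=0$, $v_i:=a_1x_1+\dots+a_ix_i$. The Poisson bracket on $\mathbb R^n$ is $\{x_i,x_j\}=x_ix_j$ for $1\le i<j\le n$, extended by skew-symmetry and the Leibniz rule to rational functions. *)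

(* Defs.v *)
From Stdlib Require Import Reals.
Open Scope R_scope.

(* Points of R^n are represented as x : nat -> R, coordinates x 1, ..., x n
   (1-based, matching the paper); values at other indices are irrelevant. *)

Fixpoint sumR (m : nat) (f : nat -> R) : R :=
  match m with
  | O => 0
  | S m' => sumR m' f + f (S m')
  end.

Definition v (a : nat -> R) (i : nat) (x : nat -> R) : R :=
  sumR i (fun k => a k * x k).

Definition Ham (n : nat) (a : nat -> R) (x : nat -> R) : R := v a n x.

Definition kahan (n : nat) (a : nat -> R) (eps : R) (i : nat) (x : nat -> R) : R :=
  x i * ((1 - eps * Ham n a x) * (1 + eps * Ham n a x)) /
  ((1 - eps * Ham n a x + 2 * eps * v a (i - 1) x) *
   (1 - eps * Ham n a x + 2 * eps * v a i x)).

Definition update (x : nat -> R) (k : nat) (t : R) : nat -> R :=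
  fun m => if Nat.eqb m k then t else x m.

Definition has_partial (f : (nat -> R) -> R) (x : nat -> R) (k : nat) (Df : R) : Prop :=
  derivable_pt_lim (fun t => f (update x k t)) (x k) Df.

(* This is the unique
   biderivation extending {x_k,x_l} = x_k x_l (k<l) by skew-symmetry and Leibniz. *)
Definition pbracket (n : nat) (x : nat -> R) (Df Dg : nat -> R) : R :=
  sumR n (fun k => sumR n (fun l =>
    if Nat.ltb k l then x k * x l * (Df k * Dg l - Df l * Dg k) else 0)).

(* Main.v *)
Require Import Defs.
From Stdlib Require Import Reals Lia Lra Bool.
Open Scope R_scope.

Lemma sumR_ext m f g : (forall k, (1<=k<=m)%nat -> f k = g k) -> sumR m f = sumR m g.
Proof. induction m; intros H; simpl; auto. rewrite IHm by (intros; apply H; lia). rewrite H by lia. reflexivity. Qed.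

Lemma sumR_lin m c1 c2 f g : sumR m (fun k => c1 * f k + c2 * g k) = c1 * sumR m f + c2 * sumR m g.
Proof. induction m; simpl. ring. rewrite IHm. ring. Qed.

Lemma sumR_swap n m F : sumR n (fun k => sumR m (fun l => F k l)) = sumR m (fun l => sumR n (fun k => F k l)).
Proof.
  induction n; simpl.
  - induction m; simpl; auto. rewrite <- IHm. ring.
  - rewrite IHn. replace (sumR m (fun l => sumR n (fun k => F k l) + F (S n) l)) with
     (1 * sumR m (fun l => sumR n (fun k => F k l)) + 1 * sumR m (fun l => F (S n) l)).
    ring. rewrite <- sumR_lin. apply sumR_ext. intros; ring.
Qed.

Lemma sumR_zero n : sumR n (fun _ => 0) = 0.
Proof. induction n; simpl; [ring|rewrite IHn; ring]. Qed.

Lemma sumR_delta n i c : (1<=i<=n)%nat -> sumR n (fun k => if k =? i then c k else 0) = c i.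
Proof.
  induction n; intros Hi. lia. cbn [sumR].
  destruct (Nat.eqb_spec (S n) i).
  - subst. rewrite (sumR_ext _ _ (fun _ => 0)). 2:{ intros k Hk. destruct (Nat.eqb_spec k (S n)); [lia|auto]. }
    rewrite sumR_zero. ring.
  - rewrite IHn by lia. ring.
Qed.

Lemma sumR_le n q w : (q <= n)%nat -> sumR n (fun l => if l <=? q then w l else 0) = sumR q w.
Proof.
  induction n; intros Hq. replace q with 0%nat by lia. reflexivity.
  destruct (Nat.eq_dec q (S n)).
  - subst. apply sumR_ext. intros k Hk. destruct (Nat.leb_spec k (S n)); [auto|lia].
  - cbn [sumR]. rewrite IHn by lia. destruct (Nat.leb_spec (S n) q); [lia|ring].
Qed.

Lemma sumR_interval n p q w : (p<=q<=n)%nat ->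
  sumR n (fun l => if (p <? l) && (l <=? q) then w l else 0) = sumR q w - sumR p w.
Proof.
  intros H. rewrite <- (sumR_le n q w), <- (sumR_le n p w) by lia.
  replace (sumR n (fun l => if l <=? q then w l else 0) - sumR n (fun l => if l <=? p then w l else 0))
   with (1 * sumR n (fun l => if l <=? q then w l else 0) + (-1) * sumR n (fun l => if l <=? p then w l else 0)) by ring.
  rewrite <- sumR_lin. apply sumR_ext. intros k Hk.
  destruct (Nat.ltb_spec p k); destruct (Nat.leb_spec k q); destruct (Nat.leb_spec k p); simpl; try lia; ring.
Qed.

Lemma pb_formula n x f g : pbracket n x f g =
  sumR n (fun k => f k * x k * (sumR n (fun l => if k <? l then x l * g l else 0)
                               - sumR n (fun l => if l <? k then x l * g l else 0))).
Proof.
  unfold pbracket.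
  transitivity (1 * sumR n (fun k => sumR n (fun l => if k <? l then x k * x l * f k * g l else 0))
     + (-1) * sumR n (fun k => sumR n (fun l => if k <? l then x k * x l * f l * g k else 0))).
  - rewrite <- sumR_lin. apply sumR_ext; intros k _. rewrite <- sumR_lin. apply sumR_ext; intros l _.
    destruct (k <? l); ring.
  - rewrite (sumR_swap n n (fun k l => if k <? l then x k * x l * f l * g k else 0)).
    rewrite <- sumR_lin. apply sumR_ext; intros k _.
    replace (f k * x k * (sumR n (fun l => if k <? l then x l * g l else 0) - sumR n (fun l => if l <? k then x l * g l else 0)))
      with ((f k * x k) * sumR n (fun l => if k <? l then x l * g l else 0) + (- (f k * x k)) * sumR n (fun l => if l <? k then x l * g l else 0)) by ring.
    rewrite <- !sumR_lin. apply sumR_ext; intros l _. destruct (k <? l); destruct (l <? k); ring.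
Qed.
Definition ex (i : nat) : nat -> R := fun k => if k =? i then 1 else 0.
Definition ev (a : nat -> R) (m : nat) : nat -> R := fun k => if k <=? m then a k else 0.

Lemma pb_anti n x f g : pbracket n x g f = - pbracket n x f g.
Proof.
  unfold pbracket. replace (- sumR n _) with ((-1) * sumR n (fun k => sumR n (fun l =>
    if k <? l then x k * x l * (f k * g l - f l * g k) else 0)) + 0 * sumR n (fun _ => 0)) by ring.
  rewrite <- sumR_lin. apply sumR_ext; intros k _.
  replace (sumR n (fun l => if k <? l then x k * x l * (g k * f l - g l * f k) else 0)) with
   ((-1) * sumR n (fun l => if k <? l then x k * x l * (f k * g l - f l * g k) else 0) + 0 * sumR n (fun _ => 0)).
  ring. rewrite <- sumR_lin. apply sumR_ext; intros l _. destruct (k <? l); ring.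
Qed.

Lemma B_x_gen n x i g : (1 <= i <= n)%nat -> pbracket n x (ex i) g =
  x i * (sumR n (fun l => if i <? l then x l * g l else 0) - sumR n (fun l => if l <? i then x l * g l else 0)).
Proof.
  intros Hi. rewrite pb_formula.
  rewrite <- (sumR_delta n i (fun k => x k * (sumR n (fun l => if k <? l then x l * g l else 0) - sumR n (fun l => if l <? k then x l * g l else 0)))) by lia.
  apply sumR_ext; intros k _. unfold ex. destruct (k =? i); ring.
Qed.

Lemma B_xx n x i j : (1 <= i < j)%nat -> (j <= n)%nat -> pbracket n x (ex i) (ex j) = x i * x j.
Proof.
  intros H1 H2. rewrite B_x_gen by lia.
  rewrite (sumR_ext _ _ (fun l => if l =? j then x l else 0)).
  2:{ intros l _. unfold ex. destruct (Nat.eqb_spec l j); destruct (Nat.ltb_spec i l); try lia; ring. }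
  rewrite (sumR_ext _ (fun l => if l <? i then x l * ex j l else 0) (fun _ => 0)).
  2:{ intros l _. unfold ex. destruct (Nat.eqb_spec l j); destruct (Nat.ltb_spec l i); try lia; ring. }
  rewrite sumR_delta, sumR_zero by lia. ring.
Qed.

Lemma inner1 n x a i m : (i <= m <= n)%nat ->
  sumR n (fun l => if i <? l then x l * ev a m l else 0) = v a m x - v a i x.
Proof.
  intros H. unfold v. rewrite <- (sumR_interval n i m (fun l => a l * x l)) by lia.
  apply sumR_ext; intros l _. unfold ev. destruct (Nat.ltb_spec i l); destruct (Nat.leb_spec l m); simpl; ring.
Qed.

Lemma inner2 n x a i m : (1 <= i)%nat -> (i <= m <= n)%nat ->
  sumR n (fun l => if l <? i then x l * ev a m l else 0) = v a (i-1) x.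
Proof.
  intros H0 H. unfold v. replace (sumR (i-1) (fun k => a k * x k)) with (sumR (i-1) (fun k => a k * x k) - sumR 0 (fun k => a k * x k)) by (simpl; ring).
  rewrite <- (sumR_interval n 0 (i-1) (fun l => a l * x l)) by lia.
  apply sumR_ext; intros l Hl. unfold ev. destruct (Nat.ltb_spec l i); destruct (Nat.leb_spec l m);
   destruct (Nat.ltb_spec 0 l); destruct (Nat.leb_spec l (i-1)); simpl; try lia; ring.
Qed.

Lemma B_xv_ge n x a i m : (1 <= i)%nat -> (i <= m <= n)%nat ->
  pbracket n x (ex i) (ev a m) = x i * (v a m x - v a i x - v a (i-1) x).
Proof.
  intros H0 H. rewrite B_x_gen by lia. rewrite inner1, inner2 by lia. ring.
Qed.

Lemma B_xv_lt n x a i m : (1 <= i <= n)%nat -> (m < i)%nat ->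
  pbracket n x (ex i) (ev a m) = - x i * v a m x.
Proof.
  intros H0 H. rewrite B_x_gen by lia.
  rewrite (sumR_ext _ (fun l => if i <? l then x l * ev a m l else 0) (fun _ => 0)).
  2:{ intros l _. unfold ev. destruct (Nat.ltb_spec i l); destruct (Nat.leb_spec l m); try lia; ring. }
  rewrite sumR_zero. unfold v. rewrite <- (sumR_le n m (fun l => a l * x l)) by lia.
  replace (sumR n (fun l => if l <? i then x l * ev a m l else 0)) with (sumR n (fun l => if l <=? m then a l * x l else 0)). ring.
  apply sumR_ext; intros l _. unfold ev. destruct (Nat.ltb_spec l i); destruct (Nat.leb_spec l m); try lia; ring.
Qed.

Lemma telesc a x m : sumR m (fun k => a k * x k * (v a k x + v a (k-1) x)) = v a m x * v a m x.
Proof.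
  induction m. unfold v; simpl; ring. cbn [sumR]. rewrite IHm. replace (S m - 1)%nat with m by lia.
  unfold v; cbn [sumR]. ring.
Qed.

Lemma B_vv n x a m p : (m <= p <= n)%nat ->
  pbracket n x (ev a m) (ev a p) = v a m x * (v a p x - v a m x).
Proof.
  intros H. rewrite pb_formula.
  rewrite (sumR_ext _ _ (fun k => if k <=? m then (a k * x k * (v a p x - (v a k x + v a (k-1) x))) else 0)).
  2:{ intros k Hk. unfold ev at 1. destruct (Nat.leb_spec k m).
      - rewrite inner1, inner2 by lia. ring.
      - ring. }
  rewrite sumR_le by lia.
  replace (v a m x * (v a p x - v a m x)) with (v a p x * sumR m (fun k => a k * x k) + (-1) * sumR m (fun k => a k * x k * (v a k x + v a (k-1) x))) by (rewrite telesc; change (sumR m (fun k => a k * x k)) with (v a m x); ring).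
  rewrite <- sumR_lin. apply sumR_ext; intros; ring.
Qed.
From Coquelicot Require Import Coquelicot.
Open Scope R_scope.

Definition gfun eps X e A c1 c2 H V1 V2 y (t : R) : R :=
  (X + e*(t-y)) * ((1 - eps*(H + A*(t-y))) * (1 + eps*(H + A*(t-y)))) /
  ((1 - eps*(H + A*(t-y)) + 2*eps*(V1 + c1*(t-y))) * (1 - eps*(H + A*(t-y)) + 2*eps*(V2 + c2*(t-y)))).

Definition FX (eps X H V1 V2 : R) := (1 - eps*H)*(1+eps*H) / ((1 - eps*H + 2*eps*V1)*(1 - eps*H + 2*eps*V2)).
Definition FV1 eps X H V1 V2 := - (X*((1 - eps*H)*(1+eps*H))*2*eps) /
   ((1 - eps*H + 2*eps*V1)*(1 - eps*H + 2*eps*V1)*(1 - eps*H + 2*eps*V2)).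
Definition FV2 eps X H V1 V2 := - (X*((1 - eps*H)*(1+eps*H))*2*eps) /
   ((1 - eps*H + 2*eps*V1)*(1 - eps*H + 2*eps*V2)*(1 - eps*H + 2*eps*V2)).
Definition FH eps X H V1 V2 := X * (-2*eps*eps*H / ((1 - eps*H + 2*eps*V1)*(1 - eps*H + 2*eps*V2))
   + eps*((1 - eps*H)*(1+eps*H)) / ((1 - eps*H + 2*eps*V1)*(1 - eps*H + 2*eps*V1)*(1 - eps*H + 2*eps*V2))
   + eps*((1 - eps*H)*(1+eps*H)) / ((1 - eps*H + 2*eps*V1)*(1 - eps*H + 2*eps*V2)*(1 - eps*H + 2*eps*V2))).

Lemma gfun_deriv eps X e A c1 c2 H V1 V2 y :
  1 - eps*H + 2*eps*V1 <> 0 -> 1 - eps*H + 2*eps*V2 <> 0 ->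
  derivable_pt_lim (gfun eps X e A c1 c2 H V1 V2 y) y
   (e * FX eps X H V1 V2 + A * FH eps X H V1 V2 + c1 * FV1 eps X H V1 V2 + c2 * FV2 eps X H V1 V2).
Proof.
  intros h1 h2. apply is_derive_Reals. unfold gfun.
  auto_derive.
  - replace (y + - y) with 0 by ring. replace (H + A * 0) with H by ring.
    replace (V1 + c1 * 0) with V1 by ring. replace (V2 + c2 * 0) with V2 by ring.
    apply Rmult_integral_contrapositive; split; lra.
  - replace (y + - y) with 0 by ring. unfold FX, FH, FV1, FV2. field. split; assumption.
Qed.

Lemma v_update a x k t m : (1 <= k)%nat -> v a m (update x k t) = v a m x + ev a m k * (t - x k).
Proof.
  intros Hk. induction m.
  - unfold v, ev; simpl. destruct (Nat.leb_spec k 0); [lia|ring].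
  - unfold v in *; cbn [sumR]. rewrite IHm. unfold ev, update.
    destruct (Nat.eqb_spec (S m) k); destruct (Nat.leb_spec k m); destruct (Nat.leb_spec k (S m)); try lia.
    + subst. ring.
    + ring.
    + ring.
Qed.

Lemma kahan_g n a eps x i k t : (1 <= k <= n)%nat ->
  kahan n a eps i (update x k t) = gfun eps (x i) (ex k i) (ev a n k) (ev a (i-1) k) (ev a i k)
     (Ham n a x) (v a (i-1) x) (v a i x) (x k) t.
Proof.
  intros Hk. unfold kahan, Ham, gfun. rewrite !v_update by lia.
  replace (update x k t i) with (x i + ex k i * (t - x k)). reflexivity.
  unfold update, ex. destruct (Nat.eqb_spec i k). subst. ring. ring.
Qed.

Definition Dexp n a eps x i (k : nat) : R :=
  FX eps (x i) (Ham n a x) (v a (i-1) x) (v a i x) * ex i k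
  + FH eps (x i) (Ham n a x) (v a (i-1) x) (v a i x) * ev a n k
  + FV1 eps (x i) (Ham n a x) (v a (i-1) x) (v a i x) * ev a (i-1) k
  + FV2 eps (x i) (Ham n a x) (v a (i-1) x) (v a i x) * ev a i k.

Lemma kahan_deriv n a eps x i k :
  (forall k, (k <= n)%nat -> 1 - eps * Ham n a x + 2 * eps * v a k x <> 0) ->
  (1 <= i <= n)%nat -> (1 <= k <= n)%nat ->
  has_partial (kahan n a eps i) x k (Dexp n a eps x i k).
Proof.
  intros hdom Hi Hk. unfold has_partial. apply is_derive_Reals.
  apply (is_derive_ext (gfun eps (x i) (ex k i) (ev a n k) (ev a (i-1) k) (ev a i k)
     (Ham n a x) (v a (i-1) x) (v a i x) (x k))).
  { intros t. rewrite kahan_g by lia. reflexivity. }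
  apply is_derive_Reals.
  replace (Dexp n a eps x i k) with (ex k i * FX eps (x i) (Ham n a x) (v a (i-1) x) (v a i x)
  + ev a n k * FH eps (x i) (Ham n a x) (v a (i-1) x) (v a i x)
  + ev a (i-1) k * FV1 eps (x i) (Ham n a x) (v a (i-1) x) (v a i x)
  + ev a i k * FV2 eps (x i) (Ham n a x) (v a (i-1) x) (v a i x)).
  2:{ unfold Dexp, ex. rewrite Nat.eqb_sym. ring. }
  apply gfun_deriv; apply hdom; lia.
Qed.

Lemma sumR_lin4 m c1 c2 c3 c4 f1 f2 f3 f4 :
  sumR m (fun k => c1*f1 k + c2*f2 k + c3*f3 k + c4*f4 k) = c1*sumR m f1 + c2*sumR m f2 + c3*sumR m f3 + c4*sumR m f4.
Proof. induction m; simpl. ring. rewrite IHm. ring. Qed.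

Definition comb4 (c1 c2 c3 c4 : R) (f1 f2 f3 f4 : nat -> R) (k : nat) : R :=
  c1 * f1 k + c2 * f2 k + c3 * f3 k + c4 * f4 k.

Lemma pb_comb_l n x c1 c2 c3 c4 f1 f2 f3 f4 g :
  pbracket n x (comb4 c1 c2 c3 c4 f1 f2 f3 f4) g =
  c1 * pbracket n x f1 g + c2 * pbracket n x f2 g + c3 * pbracket n x f3 g + c4 * pbracket n x f4 g.
Proof.
  unfold pbracket. rewrite <- sumR_lin4. apply sumR_ext; intros k _. rewrite <- sumR_lin4.
  apply sumR_ext; intros l _. unfold comb4. destruct (k <? l); ring.
Qed.

Lemma pb_comb_r n x c1 c2 c3 c4 f1 f2 f3 f4 g :
  pbracket n x g (comb4 c1 c2 c3 c4 f1 f2 f3 f4) =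
  c1 * pbracket n x g f1 + c2 * pbracket n x g f2 + c3 * pbracket n x g f3 + c4 * pbracket n x g f4.
Proof.
  unfold pbracket. rewrite <- sumR_lin4. apply sumR_ext; intros k _. rewrite <- sumR_lin4.
  apply sumR_ext; intros l _. unfold comb4. destruct (k <? l); ring.
Qed.

Lemma pb_ext n x f f' g g' : (forall k, (1 <= k <= n)%nat -> f k = f' k) ->
  (forall k, (1 <= k <= n)%nat -> g k = g' k) -> pbracket n x f g = pbracket n x f' g'.
Proof.
  intros Hf Hg. unfold pbracket. apply sumR_ext; intros k Hk. apply sumR_ext; intros l Hl.
  rewrite Hf, Hg, Hf, Hg by lia. reflexivity.
Qed.

Theorem proposition3p2 (n : nat) (a : nat -> R) (eps : R)
  (heps : 0 < eps)
  (ha : exists k, (1 <= k <= n)%nat /\ a k <> 0)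
  (x : nat -> R)
  (hdom : forall k, (k <= n)%nat -> 1 - eps * Ham n a x + 2 * eps * v a k x <> 0)
  (i j : nat) (hij : (1 <= i < j)%nat) (hjn : (j <= n)%nat) :
  (forall k, (1 <= k <= n)%nat ->
     (exists d, has_partial (kahan n a eps i) x k d) /\
     (exists d, has_partial (kahan n a eps j) x k d)) /\
  (forall Df Dg : nat -> R,
     (forall k, (1 <= k <= n)%nat -> has_partial (kahan n a eps i) x k (Df k)) ->
     (forall k, (1 <= k <= n)%nat -> has_partial (kahan n a eps j) x k (Dg k)) ->
     pbracket n x Df Dg = kahan n a eps i x * kahan n a eps j x).
Proof.
  split.
  { intros k Hk. split; eexists; apply kahan_deriv; auto; lia. }
  intros Df Dg hf hg.
  rewrite (pb_ext n x Df (Dexp n a eps x i) Dg (Dexp n a eps x j)).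
  2:{ intros k Hk. eapply uniqueness_limite. apply hf; auto. apply kahan_deriv; auto; lia. }
  2:{ intros k Hk. eapply uniqueness_limite. apply hg; auto. apply kahan_deriv; auto; lia. }
  change (Dexp n a eps x i) with (comb4 (FX eps (x i) (Ham n a x) (v a (i-1) x) (v a i x))
     (FH eps (x i) (Ham n a x) (v a (i-1) x) (v a i x))
     (FV1 eps (x i) (Ham n a x) (v a (i-1) x) (v a i x))
     (FV2 eps (x i) (Ham n a x) (v a (i-1) x) (v a i x))
     (ex i) (ev a n) (ev a (i-1)) (ev a i)).
  change (Dexp n a eps x j) with (comb4 (FX eps (x j) (Ham n a x) (v a (j-1) x) (v a j x))
     (FH eps (x j) (Ham n a x) (v a (j-1) x) (v a j x))
     (FV1 eps (x j) (Ham n a x) (v a (j-1) x) (v a j x))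
     (FV2 eps (x j) (Ham n a x) (v a (j-1) x) (v a j x))
     (ex j) (ev a n) (ev a (j-1)) (ev a j)).
  rewrite pb_comb_l, !pb_comb_r.
  rewrite (B_xx n x i j) by lia.
  rewrite (B_xv_ge n x a i n), (B_xv_ge n x a i (j-1)), (B_xv_ge n x a i j) by lia.
  rewrite (pb_anti n x (ex j) (ev a n)), (B_xv_ge n x a j n) by lia.
  rewrite (pb_anti n x (ex j) (ev a (i-1))), (B_xv_lt n x a j (i-1)) by lia.
  rewrite (pb_anti n x (ex j) (ev a i)), (B_xv_lt n x a j i) by lia.
  rewrite (B_vv n x a n n) by lia.
  rewrite (pb_anti n x (ev a (j-1)) (ev a n)), (B_vv n x a (j-1) n) by lia.
  rewrite (pb_anti n x (ev a j) (ev a n)), (B_vv n x a j n) by lia.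
  rewrite (B_vv n x a (i-1) n), (B_vv n x a (i-1) (j-1)), (B_vv n x a (i-1) j) by lia.
  rewrite (B_vv n x a i n), (B_vv n x a i (j-1)), (B_vv n x a i j) by lia.
  pose proof (hdom 0%nat ltac:(lia)) as h0.
  pose proof (hdom n ltac:(lia)) as hn.
  pose proof (hdom (i-1)%nat ltac:(lia)) as h1.
  pose proof (hdom i ltac:(lia)) as h2.
  pose proof (hdom (j-1)%nat ltac:(lia)) as h3.
  pose proof (hdom j ltac:(lia)) as h4.
  unfold kahan, FX, FH, FV1, FV2. unfold Ham in *.
  field. repeat split; assumption.
Qed.
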